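(* Let $X$ be a vector space and let $Y_\rho$ be a $\rho$-complete modular space associated with a convex modular $\rho$. Let $\varepsilon>0$ and let $\phi: X\to Y_\rho$ be a mapping with $\phi(0)=0$ and $$\rho\big(\phi(x+y-z)+\phi(x+z-y)+\phi(y+z-x)-\phi(x-y)-\phi(x-z)-\phi(z-y)-\phi(x)-\phi(y)-\phi(z)\big) \le \varepsilon$$ for all $x,y,z\in X$. Then there exists a unique quadratic mapping $h: X\to Y_\rho$ such that $$\rho(\phi(x)-h(x)) \le \frac{\varepsilon}{3} \quad\text{for all } x\in X.$$
   Context: A convex modular on a vector space $Y$ is a functional $\rho: Y\to[0,\infty)$ such that for all $u,v\in Y$: (i) $\rho(u)=0$ iff $u=0$; (ii) $\rho(\lambda u)=\rho(u)$ for every scalar $\lambda$ with $|\lambda|=1$; (iii) $\rho(a u+b v)\le a\rho(u)+b\rho(v)$ whenever $a,b\ge 0$ and $a+b=1$. The associated modular space is $Y_\rho=\{u\in Y: \rho(\lambda u)\to 0 \text{ as } \lambda\to 0\}$. A sequence $\{u_n\}$ in $Y_\rho$ is $\rho$-convergent to $u$ if $\rho(u_n-u)\to 0$; it is $\rho$-Cauchy if $\rho(u_n-u_m)\to0$ as $n,m\to\infty$; $Y_\rho$ is $\rho$-complete if every $\rho$-Cauchy sequence in $Y_\rho$ is $\rho$-convergent. A mapping $h: X\to Y_\rho$ is quadratic if $h(x+y)+h(x-y)=2h(x)+2h(y)$ for all $x,y\in X$. *)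

(* Defs.v *)
From HB Require Import structures.
From mathcomp Require Import all_boot all_order all_algebra.
From mathcomp Require Import all_classical all_reals topology normedtype sequences.
Set Implicit Arguments. Unset Strict Implicit. Unset Printing Implicit Defensive.
Import Order.TTheory GRing.Theory Num.Theory.
Import numFieldNormedType.Exports.
Local Open Scope ring_scope.
Local Open Scope classical_set_scope.

Definition convex_modular (R : realType) (Y : lmodType R) (rho : Y -> R) : Prop :=
  (forall u, 0 <= rho u) /\
  (forall u, rho u = 0 <-> u = 0) /\
  (forall (l : R) u, `|l| = 1 -> rho (l *: u) = rho u) /\
  (forall (a b : R) u v, 0 <= a -> 0 <= b -> a + b = 1 ->
     rho (a *: u + b *: v) <= a * rho u + b * rho v).

Definition modular_space (R : realType) (Y : lmodType R) (rho : Y -> R) (u : Y) : Prop :=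
  (fun l : R => rho (l *: u)) @ (0 : R)^' --> (0 : R).

Definition rho_convergent (R : realType) (Y : lmodType R) (rho : Y -> R)
  (u : nat -> Y) (v : Y) : Prop :=
  (fun n => rho (u n - v)) @ \oo --> (0 : R).

Definition rho_Cauchy (R : realType) (Y : lmodType R) (rho : Y -> R)
  (u : nat -> Y) : Prop :=
  forall e : R, 0 < e -> exists N : nat, forall n m : nat,
    (N <= n)%N -> (N <= m)%N -> rho (u n - u m) < e.

Definition rho_complete (R : realType) (Y : lmodType R) (rho : Y -> R) : Prop :=
  forall u : nat -> Y, (forall n, modular_space rho (u n)) -> rho_Cauchy rho u ->
    exists v, modular_space rho v /\ rho_convergent rho u v.

Definition quadratic (R : realType) (X Y : lmodType R) (h : X -> Y) : Prop :=
  forall x y, h (x + y) + h (x - y) = 2 *: h x + 2 *: h y.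

(* Main.v *)
Require Import Defs.
From mathcomp Require Import all_boot all_order all_algebra.
From mathcomp Require Import all_classical all_reals topology normedtype sequences.
From mathcomp Require Import ring lra.
Import Order.TTheory GRing.Theory Num.Theory.
Import numFieldNormedType.Exports.
Local Open Scope ring_scope.
Local Open Scope classical_set_scope.

Lemma le_lim (R : realType) (a b : R) (c : nat -> R) :
  (forall n, a <= b + c n) -> c @ \oo --> (0:R) -> a <= b.
Proof.
move=> H Hc; rewrite leNgt; apply/negP => ba.
have ep : 0 < a - b by rewrite subr_gt0.
have [N _ HN] := cvgr0_norm_lt _ Hc _ ep.
have := HN N (leqnn N) => /=.
have := H N.
move=> h1 h2.
have : c N < a - b by apply: le_lt_trans h2; exact: ler_norm.
rewrite ltrBrDl. by rewrite ltNge h1.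
Qed.

Lemma rho0 (R : realType) (Y : lmodType R) (rho : Y -> R) :
  convex_modular rho -> rho 0 = 0.
Proof. by case=> _ [H _]; apply/H. Qed.

Lemma rhoN (R : realType) (Y : lmodType R) (rho : Y -> R) u :
  convex_modular rho -> rho (- u) = rho u.
Proof.
case=> _ [_ [H _]]; rewrite -scaleN1r; apply: H; by rewrite normrN normr1.
Qed.

Lemma rho_comb (R : realType) (Y : lmodType R) (rho : Y -> R) a b u v :
  convex_modular rho -> 0 <= a -> 0 <= b -> a + b <= 1 ->
  rho (a *: u + b *: v) <= a * rho u + b * rho v.
Proof.
move=> C a0 b0 ab.
have [s0|sn0] := eqVneq (a + b) 0.
  have a00 : a = 0 by apply/eqP; rewrite eq_le a0 andbT -s0 lerDl.
  have b00 : b = 0 by move: s0; rewrite a00 add0r.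
  by rewrite a00 b00 !scale0r addr0 rho0 // !mul0r addr0.
have sp : 0 < a + b by rewrite lt_def sn0 addr_ge0.
have E : a *: u + b *: v = (a + b) *: ((a / (a + b)) *: u + (b / (a + b)) *: v)
            + (1 - (a + b)) *: 0.
  rewrite scaler0 addr0 scalerDr !scalerA !mulrA !(mulrC (a+b)) -!mulrA.
  by rewrite divff // !mulr1.
rewrite E.
case: C => [r0 [rz [rs rc]]].
apply: le_trans (rc _ _ _ _ (ltW sp) _ _) _; first by rewrite subr_ge0.
  by rewrite addrCA subrr addr0.
rewrite (rz 0).2 // mulr0 addr0.
apply: le_trans (ler_wpM2l (ltW sp) (rc _ _ _ _ _ _ _)) _.
- by rewrite divr_ge0 // ltW.
- by rewrite divr_ge0 // ltW.
- by rewrite -mulrDl divff.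
rewrite le_eqVlt; apply/orP; left; apply/eqP; field; by rewrite sn0.
Qed.


Lemma rho_sc (R : realType) (Y : lmodType R) (rho : Y -> R) c u :
  convex_modular rho -> 0 <= c -> c <= 1 -> rho (c *: u) <= c * rho u.
Proof.
move=> C c0 c1.
have := @rho_comb _ _ rho c 0 u 0 C c0 (lexx 0); rewrite addr0 scaler0 addr0 mul0r addr0.
exact.
Qed.

Lemma sum_ge0s (R : realType) (s : seq (R * R)) :
  all (fun p => 0 <= p.1) s -> 0 <= \sum_(p <- s) p.1.
Proof. by move=> H; rewrite big_seq sumr_ge0 // => p /(allP H). Qed.

Lemma sum_zero (R : realType) (Y : lmodType R) (f : Y -> R) (s : seq (R * Y)) :
  all (fun p => 0 <= p.1) s -> \sum_(p <- s) p.1 = 0 ->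
  \sum_(p <- s) p.1 *: p.2 = 0 /\ \sum_(p <- s) p.1 * f p.2 = 0.
Proof.
elim: s => [|[a u] t IH]; first by rewrite !big_nil.
rewrite /= !big_cons /= => /andP [a0 ta] /eqP.
rewrite paddr_eq0 //; last by rewrite big_seq sumr_ge0 // => p /(allP ta).
case/andP => /eqP -> /eqP St.
have [-> ->] := IH ta St.
by rewrite scale0r mul0r !addr0.
Qed.

Lemma rho_sum (R : realType) (Y : lmodType R) (rho : Y -> R) (s : seq (R * Y)) :
  convex_modular rho ->
  all (fun p => 0 <= p.1) s -> \sum_(p <- s) p.1 <= 1 ->
  rho (\sum_(p <- s) p.1 *: p.2) <= \sum_(p <- s) p.1 * rho p.2.
Proof.
move=> C; have [n] := ubnP (size s); elim: n s => // n IH [|[a u] t] /= Hn.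
  by rewrite !big_nil rho0.
rewrite !big_cons /= => /andP [a0 ta] Hs.
have r0 : forall w, 0 <= rho w by case: C.
have S0 : 0 <= \sum_(p <- t) p.1 by rewrite big_seq sumr_ge0 // => p /(allP ta).
have [Sz|Snz] := eqVneq (\sum_(p <- t) p.1) 0.
  have [-> ->] := @sum_zero _ _ rho t ta Sz.
  rewrite !addr0; apply: rho_sc => //.
  by move: Hs; rewrite Sz addr0.
set S := \sum_(p <- t) p.1.
have Sp : 0 < S by rewrite lt_def Snz S0.
set t' := map (fun p => (p.1 / S, p.2)) t.
have E1 : \sum_(p <- t) p.1 *: p.2 = S *: \sum_(p <- t') p.1 *: p.2.
  rewrite big_map scaler_sumr; apply: eq_bigr => p _ /=.
  by rewrite scalerA mulrCA divff // mulr1.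
have E2 : \sum_(p <- t) p.1 * rho p.2 = S * \sum_(p <- t') p.1 * rho p.2.
  rewrite big_map mulr_sumr; apply: eq_bigr => p _ /=.
  by rewrite mulrA mulrCA divff // mulr1.
rewrite E1 E2.
apply: le_trans (@rho_comb _ _ rho a S u _ C a0 (ltW Sp) Hs) _.
rewrite lerD2l; apply: ler_wpM2l; first exact: ltW.
apply: IH.
  by rewrite size_map.
  by apply/allP => -[b w] /mapP [[b' w'] /(allP ta) /= b0 [-> _]]; rewrite divr_ge0 // ltW.
by rewrite big_map -mulr_suml divff.
Qed.
Fact lin_key : unit. Proof. by []. Qed.
Definition lin_def (R : realType) (Y : lmodType R) (v : nat -> Y) (a0 a1 a2 a3 a4 a5 a6 a7 a8 : R) : Y :=
  a0 *: v 0%N + a1 *: v 1%N + a2 *: v 2%N + a3 *: v 3%N + a4 *: v 4%N + a5 *: v 5%N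
  + a6 *: v 6%N + a7 *: v 7%N + a8 *: v 8%N.
Definition lin := locked_with lin_key lin_def.
Lemma linE : lin = lin_def. Proof. by rewrite /lin; case: lin_key. Qed.
Arguments lin {R Y} v a0 a1 a2 a3 a4 a5 a6 a7 a8.
Section L.
Variables (R : realType) (Y : lmodType R) (v : nat -> Y).
Lemma lin_add a0 a1 a2 a3 a4 a5 a6 a7 a8 b0 b1 b2 b3 b4 b5 b6 b7 b8 :
  lin v a0 a1 a2 a3 a4 a5 a6 a7 a8 + lin v b0 b1 b2 b3 b4 b5 b6 b7 b8 =
  lin v (a0+b0) (a1+b1) (a2+b2) (a3+b3) (a4+b4) (a5+b5) (a6+b6) (a7+b7) (a8+b8).
Proof. rewrite linE /lin_def !scalerDl; do ? (rewrite addrACA; congr (_ + _)). Qed.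
Lemma lin_opp a0 a1 a2 a3 a4 a5 a6 a7 a8 :
  - lin v a0 a1 a2 a3 a4 a5 a6 a7 a8 = lin v (-a0) (-a1) (-a2) (-a3) (-a4) (-a5) (-a6) (-a7) (-a8).
Proof. by rewrite linE /lin_def !opprD -!scaleNr. Qed.
Lemma lin_sub a0 a1 a2 a3 a4 a5 a6 a7 a8 b0 b1 b2 b3 b4 b5 b6 b7 b8 :
  lin v a0 a1 a2 a3 a4 a5 a6 a7 a8 - lin v b0 b1 b2 b3 b4 b5 b6 b7 b8 =
  lin v (a0-b0) (a1-b1) (a2-b2) (a3-b3) (a4-b4) (a5-b5) (a6-b6) (a7-b7) (a8-b8).
Proof. by rewrite lin_opp lin_add. Qed.
Lemma lin_scale k a0 a1 a2 a3 a4 a5 a6 a7 a8 :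
  k *: lin v a0 a1 a2 a3 a4 a5 a6 a7 a8 =
  lin v (k*a0) (k*a1) (k*a2) (k*a3) (k*a4) (k*a5) (k*a6) (k*a7) (k*a8).
Proof. by rewrite linE /lin_def !scalerDr !scalerA. Qed.
Lemma linZ : 0 = lin v 0 0 0 0 0 0 0 0 0.
Proof. by rewrite linE /lin_def !scale0r !addr0. Qed.
Lemma lin0 : v 0%N = lin v 1 0 0 0 0 0 0 0 0.
Proof. by rewrite linE /lin_def scale1r !scale0r !addr0. Qed.
Lemma lin1 : v 1%N = lin v 0 1 0 0 0 0 0 0 0.
Proof. by rewrite linE /lin_def scale1r !scale0r !addr0 ?add0r. Qed.
Lemma lin2 : v 2%N = lin v 0 0 1 0 0 0 0 0 0.
Proof. by rewrite linE /lin_def scale1r !scale0r !addr0 ?add0r. Qed.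
Lemma lin3 : v 3%N = lin v 0 0 0 1 0 0 0 0 0.
Proof. by rewrite linE /lin_def scale1r !scale0r !addr0 ?add0r. Qed.
Lemma lin4 : v 4%N = lin v 0 0 0 0 1 0 0 0 0.
Proof. by rewrite linE /lin_def scale1r !scale0r !addr0 ?add0r. Qed.
Lemma lin5 : v 5%N = lin v 0 0 0 0 0 1 0 0 0.
Proof. by rewrite linE /lin_def scale1r !scale0r !addr0 ?add0r. Qed.
Lemma lin6 : v 6%N = lin v 0 0 0 0 0 0 1 0 0.
Proof. by rewrite linE /lin_def scale1r !scale0r !addr0 ?add0r. Qed.
Lemma lin7 : v 7%N = lin v 0 0 0 0 0 0 0 1 0.
Proof. by rewrite linE /lin_def scale1r !scale0r !addr0 ?add0r. Qed.
Lemma lin8 : v 8%N = lin v 0 0 0 0 0 0 0 0 1.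
Proof. by rewrite linE /lin_def scale1r !scale0r !addr0 ?add0r. Qed.
End L.

Ltac linsolve v :=
  try rewrite (@lin0 _ _ v); try rewrite (@lin1 _ _ v); try rewrite (@lin2 _ _ v);
  try rewrite (@lin3 _ _ v); try rewrite (@lin4 _ _ v); try rewrite (@lin5 _ _ v);
  try rewrite (@lin6 _ _ v); try rewrite (@lin7 _ _ v); try rewrite (@lin8 _ _ v);
  try rewrite (@linZ _ _ v);
  rewrite !(lin_add, lin_sub, lin_scale, lin_opp).

Definition Eexp (R : realType) (X Y : lmodType R) (phi : X -> Y) (x y z : X) : Y :=
  phi (x + y - z) + phi (x + z - y) + phi (y + z - x)
          - phi (x - y) - phi (x - z) - phi (z - y)
          - phi x - phi y - phi z.
Arguments Eexp {R X Y} phi x y z.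

Lemma Qphi_id (R : realType) (X Y : lmodType R) (phi : X -> Y) (a b : X) : phi 0 = 0 ->
  phi (a + b) + phi (a - b) - 2 *: phi a - 2 *: phi b =
  Eexp phi a b 0 - Eexp phi (a - b) 0 0 + Eexp phi b 0 0.
Proof.
move=> p0; rewrite /Eexp ?subr0 ?addr0 ?sub0r ?add0r p0 ?opprB.
pose v := nth 0 [:: phi (a + b); phi (a - b); phi (b - a); phi (- b); phi a; phi b; 0; 0; 0].
rewrite (_ : phi (a + b) = v 0%N) // (_ : phi (a - b) = v 1%N) // (_ : phi (b - a) = v 2%N) //.
rewrite (_ : phi (- b) = v 3%N) // (_ : phi a = v 4%N) // (_ : phi b = v 5%N) //.

linsolve v; congr lin; ring.
Qed.

Lemma cvg0D (R : realType) (u w : nat -> R) :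
  u @ \oo --> (0:R) -> w @ \oo --> (0:R) -> (fun n => u n + w n) @ \oo --> (0:R).
Proof. by move=> Hu Hw; rewrite -(addr0 0); apply: cvgD. Qed.

Lemma cvg0M (R : realType) (k : R) (u : nat -> R) :
  u @ \oo --> (0:R) -> (fun n => k * u n) @ \oo --> (0:R).
Proof. by move=> Hu; rewrite -(mulr0 k); apply: cvgMl_tmp. Qed.

Lemma geo4 (R : realType) : (fun n => ((4:R)^-1)^+n) @ \oo --> (0:R).
Proof.
suff -> : (fun n => ((4:R)^-1)^+n) = geometric 1 (4^-1).
  apply: cvg_geometric; rewrite ger0_norm; lra.
by apply/funext => n /=; rewrite mul1r.
Qed.

Lemma ms_sc (R : realType) (Y : lmodType R) (rho : Y -> R) c u :
  convex_modular rho -> 0 <= c -> c <= 1 -> modular_space rho u -> modular_space rho (c *: u).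
Proof.
move=> C c0 c1 H; rewrite /modular_space.
apply: (squeeze_cvgr _ (cvg_cst 0) H).
apply: nearW => l /=.
have r0 : forall w, 0 <= rho w by case: C.
rewrite r0 /= scalerA mulrC -scalerA.
apply: le_trans (@rho_sc _ _ rho c (l *: u) C c0 c1) _.
by rewrite -[X in _ <= X]mul1r ler_wpM2r.
Qed.


Lemma eq_rho_le (R : realType) (Y : lmodType R) (rho : Y -> R) (a b : Y) e :
  a = b -> rho b <= e -> rho a <= e.
Proof. by move->. Qed.

Theorem corollary2p2 (R : realType) (X Y : lmodType R) (rho : Y -> R)
  (eps : R) (phi : X -> Y) :
  convex_modular rho ->
  rho_complete rho ->
  0 < eps ->
  (forall x, modular_space rho (phi x)) ->
  phi 0 = 0 ->
  (forall x y z : X,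
     rho (phi (x + y - z) + phi (x + z - y) + phi (y + z - x)
          - phi (x - y) - phi (x - z) - phi (z - y)
          - phi x - phi y - phi z) <= eps) ->
  exists h : X -> Y,
    ((forall x, modular_space rho (h x)) /\ quadratic h /\
     (forall x, rho (phi x - h x) <= eps / 3)) /\
    (forall h' : X -> Y,
       (forall x, modular_space rho (h' x)) -> quadratic h' ->
       (forall x, rho (phi x - h' x) <= eps / 3) -> h' = h).
Proof.
move=> C Hc ep Hm p0 HE.
have r0 : forall w, 0 <= rho w by case: C.
have HE' : forall x y z, rho (Eexp phi x y z) <= eps by exact: HE.
pose g := fun (n : nat) (x : X) => ((4:R)^-1)^+n *: phi (((2:R)^+n) *: x).
have two : forall z : X, (2:R) *: z = z + z by move=> z; rewrite scaler_nat mulr2n.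
have gS : forall n x, g n.+1 x = (4:R)^-1 *: g n (2 *: x).
  move=> n x; rewrite /g exprS -scalerA; congr (_ *: (_ *: phi _)).
  by rewrite scalerA -exprSr.
have g0 : forall x, g 0%N x = phi x by move=> x; rewrite /g !expr0 !scale1r.
have HD : forall x, rho (phi (2 *: x) - 4 *: phi x) <= eps.
  move=> x; have H := HE' (2 *: x) x x; rewrite /Eexp in H.
  have a1 : 2 *: x + x - x = 2 *: x by rewrite addrK.
  have a2 : x + x - 2 *: x = 0 by rewrite two subrr.
  have a3 : 2 *: x - x = x by rewrite two addrK.
  rewrite a1 a2 a3 subrr p0 in H.
  apply: eq_rho_le H.
  pose v := nth 0 [:: phi x; phi (2 *: x); 0; 0; 0; 0; 0; 0; 0].
  rewrite (_ : phi x = v 0%N) // (_ : phi (2 *: x) = v 1%N) //.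
  linsolve v; congr lin; ring.
have K : forall n x c, 0 <= c -> c <= 3 -> rho (c *: (phi x - g n x)) <= c * (eps / 3).
  elim=> [|n IH] x c c0 c3.
    by rewrite g0 subrr scaler0 rho0 // mulr_ge0 // divr_ge0 // ltW.
  have E : c *: (phi x - g n.+1 x) = (c / 4) *: (- (phi (2 *: x) - 4 *: phi x))
      + (c / 12) *: (3 *: (phi (2 *: x) - g n (2 *: x))).
    rewrite gS.
    pose v := nth 0 [:: phi x; phi (2 *: x); g n (2 *: x); 0; 0; 0; 0; 0; 0].
    rewrite (_ : phi x = v 0%N) // (_ : phi (2 *: x) = v 1%N) // (_ : g n (2 *: x) = v 2%N) //.
    linsolve v; congr lin; by field.
  rewrite E; apply: le_trans (@rho_comb _ _ rho (c / 4) (c / 12) _ _ C _ _ _) _.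
  - lra.
  - lra.
  - lra.
  rewrite rhoN //.
  apply: le_trans (lerD (ler_wpM2l _ (HD x)) (ler_wpM2l _ (IH (2 *: x) 3 _ _))) _.
  - lra.
  - lra.
  - lra.
  - lra.
  rewrite le_eqVlt; apply/orP; left; apply/eqP; by field.
have q0 : forall n, 0 <= ((4:R)^-1)^+n by move=> n; apply: exprn_ge0; lra.
have q1 : forall n, ((4:R)^-1)^+n <= 1 by move=> n; apply: exprn_ile1; lra.
have qmono : forall N n, (N <= n)%N -> ((4:R)^-1)^+n <= ((4:R)^-1)^+N.
  move=> N n Nn; rewrite -(subnKC Nn) exprD.
  rewrite -[X in _ <= X]mulr1; apply: ler_wpM2l; [exact: q0 | exact: q1].
have gadd : forall n k x, g (n + k)%N x = ((4:R)^-1)^+n *: g k (((2:R)^+n) *: x).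
  move=> n k x; rewrite /g [RHS]scalerA -exprD; congr (_ *: phi _).
  by rewrite scalerA -exprD addnC.
have Hcau : forall x n m, (n <= m)%N -> rho (g n x - g m x) <= ((4:R)^-1)^+n * (eps / 3).
  move=> x n m nm; rewrite -(subnKC nm) gadd.
  have -> : g n x = ((4:R)^-1)^+n *: phi (((2:R)^+n) *: x) by [].
  rewrite -scalerBr; apply: K; first exact: q0.
  by apply: le_trans (q1 n) _; lra.
have seqs : forall x, exists v, modular_space rho v /\ rho_convergent rho (fun n => g n x) v.
  move=> x; apply: Hc.
    by move=> n; apply: (@ms_sc _ _ rho _ _ C (q0 n) (q1 n) (Hm _)).
  move=> e e0.
  have d0 : 0 < e / (eps / 3) by apply: divr_gt0 => //; lra.
  have [N _ HN] := cvgr0_norm_lt _ (geo4 R) _ d0.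
  exists N => n m Nn Nm.
  have key : forall a b, (N <= a)%N -> (a <= b)%N -> rho (g a x - g b x) < e.
    move=> a b Na ab; apply: le_lt_trans (Hcau x a b ab) _.
    apply: le_lt_trans (ler_wpM2r _ (qmono N a Na)) _; first lra.
    rewrite -ltr_pdivlMr; last lra.
    apply: le_lt_trans (HN N (leqnn N)); exact: ler_norm.
  case: (leqP n m) => nm; first exact: key.
  by rewrite -opprB rhoN //; apply: key => //; exact: ltnW.
have [h Hh] := choice seqs.
have Hconv : forall z, (fun n => rho (g n z - h z)) @ \oo --> (0:R) by move=> z; exact: (Hh z).2.
have hq : quadratic h.
  move=> x y.
  suff HQ : h (x + y) + h (x - y) - 2 *: h x - 2 *: h y = 0.
    by apply/eqP; rewrite -subr_eq0 opprD addrA; apply/eqP.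
  pose cn := fun n => 16^-1 * rho (g n (x + y) - h (x + y)) + 16^-1 * rho (g n (x - y) - h (x - y))
     + 2/16 * rho (g n x - h x) + 2/16 * rho (g n y - h y) + 3/16 * eps * ((4:R)^-1)^+n.
  have bnd : forall n, rho ((16:R)^-1 *: (h (x + y) + h (x - y) - 2 *: h x - 2 *: h y)) <= 0 + cn n.
    move=> n.
    set q := ((4:R)^-1)^+n.
    set X' := ((2:R)^+n) *: x; set Y' := ((2:R)^+n) *: y.
    set E1 := Eexp phi X' Y' 0; set E2 := Eexp phi (X' - Y') 0 0; set E3 := Eexp phi Y' 0 0.
    have Qg : g n (x + y) + g n (x - y) - 2 *: g n x - 2 *: g n y = q *: (E1 - E2 + E3).
      rewrite /E1 /E2 /E3 -Qphi_id //.
      have ga : g n (x + y) = q *: phi (X' + Y') by rewrite /g scalerDr.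
      have gb : g n (x - y) = q *: phi (X' - Y') by rewrite /g scalerBr.
      have gx : g n x = q *: phi X' by [].
      have gy : g n y = q *: phi Y' by [].
      rewrite ga gb gx gy.
      pose v := nth 0 [:: phi (X' + Y'); phi (X' - Y'); phi X'; phi Y'; 0; 0; 0; 0; 0].
      rewrite (_ : phi (X' + Y') = v 0%N) // (_ : phi (X' - Y') = v 1%N) //.
      rewrite (_ : phi X' = v 2%N) // (_ : phi Y' = v 3%N) //.
      linsolve v; congr lin; by field.
    have Id : (16:R)^-1 *: (h (x + y) + h (x - y) - 2 *: h x - 2 *: h y) =
      \sum_(p <- [:: ((16:R)^-1, - (g n (x + y) - h (x + y)));
                    ((16:R)^-1, - (g n (x - y) - h (x - y)));
                    (2/16, g n x - h x); (2/16, g n y - h y);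
                    (q/16, E1); (q/16, - E2); (q/16, E3)]) p.1 *: p.2.
      rewrite !big_cons big_nil /= addr0.
      have T : q/16 *: E1 + (q/16 *: - E2 + q/16 *: E3) = (16:R)^-1 *: (q *: (E1 - E2 + E3)).
        pose v := nth 0 [:: E1; E2; E3; 0; 0; 0; 0; 0; 0].
        rewrite (_ : E1 = v 0%N) // (_ : E2 = v 1%N) // (_ : E3 = v 2%N) //.
        linsolve v; congr lin; by field.
      rewrite T -Qg.
      pose v := nth 0 [:: h (x + y); h (x - y); h x; h y; g n (x + y); g n (x - y); g n x; g n y; 0].
      rewrite (_ : h (x + y) = v 0%N) // (_ : h (x - y) = v 1%N) // (_ : h x = v 2%N) //.
      rewrite (_ : h y = v 3%N) // (_ : g n (x + y) = v 4%N) // (_ : g n (x - y) = v 5%N) //.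
      rewrite (_ : g n x = v 6%N) // (_ : g n y = v 7%N) //.
      linsolve v; congr lin; by field.
    have qq := q0 n; have qq1 := q1 n; rewrite -/q in qq qq1.
    rewrite Id; apply: le_trans (@rho_sum _ _ rho _ C _ _) _.
    - by rewrite /= ?andbT; repeat (apply/andP; split); lra.
    - rewrite !big_cons big_nil /=; lra.
    rewrite !big_cons big_nil /= !rhoN // addr0 add0r /cn -/q.
    have m1 := ler_wpM2l (_ : 0 <= q / 16) (HE' X' Y' 0).
    have m2 := ler_wpM2l (_ : 0 <= q / 16) (HE' (X' - Y') 0 0).
    have m3 := ler_wpM2l (_ : 0 <= q / 16) (HE' Y' 0 0).
    rewrite -/E1 -/E2 -/E3 in m1 m2 m3.
    have := m1 ltac:(lra); have := m2 ltac:(lra); have := m3 ltac:(lra).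
    lra.
  have cn0 : cn @ \oo --> (0:R).
    apply: cvg0D; last exact: cvg0M (geo4 R).
    apply: cvg0D; last exact: cvg0M (Hconv _).
    apply: cvg0D; last exact: cvg0M (Hconv _).
    apply: cvg0D; exact: cvg0M (Hconv _).
  have := @le_lim _ _ _ _ bnd cn0.
  rewrite le_eqVlt ltNge r0 orbF => /eqP /((proj1 (proj2 C)) _).
  have n16 : (16:R) != 0 by rewrite pnatr_eq0.
  by move/eqP; rewrite scaler_eq0 invr_eq0 (negbTE n16) /= => /eqP.
have hz : forall k : X -> Y, quadratic k -> k 0 = 0.
  move=> k kq; have := kq 0 0; rewrite addr0 subr0 => H.
  pose v := nth 0 [:: k 0; 0; 0; 0; 0; 0; 0; 0; 0].
  have -> : k 0 = (- 2^-1) *: ((k 0 + k 0) - (2 *: k 0 + 2 *: k 0)).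
    rewrite (_ : k 0 = v 0%N) //; linsolve v; congr lin; by field.
  by rewrite H subrr scaler0.
have h2 : forall k : X -> Y, quadratic k -> forall z, k (2 *: z) = 4 *: k z.
  move=> k kq z; have := kq z z; rewrite subrr hz // addr0 -two => ->.
  pose v := nth 0 [:: k z; 0; 0; 0; 0; 0; 0; 0; 0].
  rewrite (_ : k z = v 0%N) //; linsolve v; congr lin; by field.
have hpow : forall k : X -> Y, quadratic k -> forall n z,
    k z = ((4:R)^-1)^+n *: k (((2:R)^+n) *: z).
  move=> k kq; elim=> [|n IH] z; first by rewrite !expr0 !scale1r.
  have e : ((2:R)^+n.+1) *: z = 2 *: (((2:R)^+n) *: z) by rewrite scalerA -exprS.
  rewrite IH e h2 // scalerA; congr (_ *: _).
  rewrite exprS; by field.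
have bound : forall x, rho (phi x - h x) <= eps / 3.
  move=> x.
  have bnd : forall n, rho (phi x - h x) <= eps / 3 + 4^-1 * rho (g n (2 *: x) - h (2 *: x)).
    move=> n.
    have E : phi x - h x = (3/4) *: ((4/3) *: (phi x - g n.+1 x)) + 4^-1 *: (g n (2 *: x) - h (2 *: x)).
      rewrite gS (h2 h hq).
      pose v := nth 0 [:: phi x; g n (2 *: x); h x; 0; 0; 0; 0; 0; 0].
      rewrite (_ : phi x = v 0%N) // (_ : g n (2 *: x) = v 1%N) // (_ : h x = v 2%N) //.
      linsolve v; congr lin; by field.
    rewrite E; apply: le_trans (@rho_comb _ _ rho (3/4) (4^-1) _ _ C _ _ _) _.
    - lra.
    - lra.
    - lra.
    have := K n.+1 x (4/3) ltac:(lra) ltac:(lra).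
    lra.
  apply: (@le_lim _ _ _ _ bnd); apply: cvg0M; exact: Hconv.
have uniq : forall h' : X -> Y,
    (forall x, modular_space rho (h' x)) -> quadratic h' ->
    (forall x, rho (phi x - h' x) <= eps / 3) -> h' = h.
  move=> h' _ hq' hb'; apply/funext => x; apply/eqP; rewrite -subr_eq0; apply/eqP.
  have bnd : forall n, rho (h' x - h x) <= 0 + (eps / 6) * ((4:R)^-1)^+n.
    move=> n.
    set q := ((4:R)^-1)^+n.+1; set y := ((2:R)^+n.+1) *: x.
    have E : h' x - h x = (2 * q) *: (2^-1 *: (- (phi y - h' y)) + 2^-1 *: (phi y - h y)).
      rewrite (hpow h' hq' n.+1 x) (hpow h hq n.+1 x) -/q -/y.
      pose v := nth 0 [:: phi y; h' y; h y; 0; 0; 0; 0; 0; 0].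
      rewrite (_ : phi y = v 0%N) // (_ : h' y = v 1%N) // (_ : h y = v 2%N) //.
      linsolve v; congr lin; by field.
    have qq : q = 4^-1 * ((4:R)^-1)^+n by rewrite /q exprS.
    have qa := q0 n; have qb := q1 n.
    rewrite E; apply: le_trans (@rho_sc _ _ rho (2 * q) _ C _ _) _.
    - rewrite qq; apply: mulr_ge0; first lra.
      by apply: mulr_ge0; lra.
    - rewrite qq; nra.
    apply: le_trans (ler_wpM2l _ (@rho_comb _ _ rho 2^-1 2^-1 _ _ C _ _ _)) _.
    - rewrite qq; apply: mulr_ge0; first lra.
      by apply: mulr_ge0; lra.
    - lra.
    - lra.
    - lra.
    rewrite rhoN //.
    have := hb' y; have := bound y.
    rewrite qq => b1 b2.
    have m : 0 <= 2 * (4^-1 * ((4:R)^-1)^+n) by apply: mulr_ge0; [lra | apply: mulr_ge0; lra].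
    have := ler_wpM2l m (lerD (ler_wpM2l (_ : 0 <= 2^-1) b2) (ler_wpM2l (_ : 0 <= 2^-1) b1)).
    move=> /(_ ltac:(lra) ltac:(lra)) H.
    apply: le_trans H _.
    rewrite le_eqVlt; apply/orP; left; apply/eqP; by field.
  have := @le_lim _ _ _ _ bnd (@cvg0M _ (eps / 6) _ (geo4 R)).
  rewrite le_eqVlt ltNge r0 orbF => /eqP.
  by move/((proj1 (proj2 C)) _).
exists h; split; last exact: uniq.
split; first by move=> x; exact: (Hh x).1.
by split.
Qed.
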